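(* Let $G=(V,E)$ be an undirected graph (loops excluded, parallel edges allowed). An orientation of $G$ is decreasingly minimal if and only if it is increasingly maximal.
   Context: For an orientation $D$ of $G$, its in-degree vector is $m(v)=\varrho_D(v)$, the number of arcs of $D$ with head $v$. An orientation is decreasingly minimal (dec-min) if its in-degree vector is decreasingly minimal among in-degree vectors of all orientations of $G$: its largest component is as small as possible, within this its second largest is as small as possible, and so on. It is increasingly maximal (inc-max) if its in-degree vector has smallest component as large as possible, within this its second smallest component as large as possible, and so on. *)

(* Defs.v *)
From mathcomp Require Import all_boot.
Set Implicit Arguments. Unset Strict Implicit. Unset Printing Implicit Defensive.

(* A finite undirected multigraph G = (V, E): each edge e : E has two
   end-nodes [ends e]; loops are excluded by a hypothesis in the theorem. *)

Definition orientation (E : finType) := {ffun E -> bool}.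

Definition head_of (V E : finType) (ends : E -> V * V) (D : orientation E)
  (e : E) : V := if D e then (ends e).2 else (ends e).1.

Definition indeg (V E : finType) (ends : E -> V * V) (D : orientation E)
  (v : V) : nat := #|[set e : E | head_of ends D e == v]|.

Fixpoint lex_le (s t : seq nat) : bool :=
  match s, t with
  | [::], _ => true
  | _ :: _, [::] => false
  | x :: s', y :: t' => (x < y) || ((x == y) && lex_le s' t')
  end.

Definition dec_vec (V E : finType) (ends : E -> V * V) (D : orientation E) :=
  sort geq [seq indeg ends D v | v <- enum V].
Definition inc_vec (V E : finType) (ends : E -> V * V) (D : orientation E) :=
  sort leq [seq indeg ends D v | v <- enum V].

Definition dec_min (V E : finType) (ends : E -> V * V) (D : orientation E) :=
  forall D' : orientation E, lex_le (dec_vec ends D) (dec_vec ends D').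

Definition inc_max (V E : finType) (ends : E -> V * V) (D : orientation E) :=
  forall D' : orientation E, lex_le (inc_vec ends D') (inc_vec ends D).

(* Main.v *)
Require Import Defs.
From mathcomp Require Import all_boot zify.
Set Implicit Arguments. Unset Strict Implicit. Unset Printing Implicit Defensive.

Lemma lex_refl s : lex_le s s.
Proof. by elim: s => //= x s ->; rewrite eqxx orbT. Qed.

Lemma lex_trans s t u : lex_le s t -> lex_le t u -> lex_le s u.
Proof.
elim: s t u => [|x s IH] [|y t] [|z u] //=.
case/orP=> [h1|/andP[/eqP-> h1]]; case/orP=> [h2|/andP[/eqP<- h2]].
- by rewrite (ltn_trans h1 h2).
- by rewrite h1.
- by rewrite h2.
- by rewrite eqxx (IH _ _ h1 h2) orbT.
Qed.

Lemma lex_total s t : lex_le s t || lex_le t s.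
Proof.
elim: s t => [|x s IH] [|y t] //=.
case: (ltngtP x y) => //= ->; by rewrite eqxx /= IH.
Qed.

Lemma exists_min (T : finType) (r : rel T) (x0 : T) :
  total r -> transitive r -> reflexive r -> exists m, forall y, r m y.
Proof.
move=> tot tr rf.
have hs := sort_sorted tot (enum T).
have hm : forall y, y \in sort r (enum T) by move=> y; rewrite mem_sort mem_enum.
move: hs hm; case: (sort r (enum T)) => [|m s] hs hm.
  by have := hm x0.
exists m => y; have := hm y; rewrite inE => /orP[/eqP->|hy]; first exact: rf.
by have := order_path_min tr hs => /allP; apply.
Qed.

Lemma count_all0 (s : seq nat) x j : all (fun z => z <= x) s -> x < j ->
  count (fun z => j <= z) s = 0.
Proof. by elim: s => //= z s IH /andP[hz hs] hj; rewrite IH //; lia. Qed.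

Lemma count_all0' (s : seq nat) x j : all (fun z => x <= z) s -> j < x ->
  count (fun z => z <= j) s = 0.
Proof. by elim: s => //= z s IH /andP[hz hs] hj; rewrite IH //; lia. Qed.

Lemma lex_dec (u w : seq nat) j : sorted geq u -> sorted geq w ->
  count (fun z => j <= z) w < count (fun z => j <= z) u ->
  (forall i, j < i -> count (fun z => i <= z) w = count (fun z => i <= z) u) ->
  ~~ lex_le u w.
Proof.
elim: u w j => [|x u IH] [|y w] j //= su sw hc heq.
have tr : transitive geq by move=> a b c h1 h2; exact: leq_trans h2 h1.
have au := order_path_min tr su; have aw := order_path_min tr sw.
case: (ltngtP x y) => hxy /=.
- exfalso.
  have c0 : forall k, x < k -> count (fun z => k <= z) u = 0.
    by move=> k hk; apply: (count_all0 _ hk).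
  case: (ltnP j y) => hj.
  + have := heq y hj; rewrite leqnn c0 //; have := hxy; rewrite ltnNge => /negbTE->.
    by [].
  + have hxj : x < j := leq_trans hxy hj.
    move: hc; rewrite c0 //; move: hxj; rewrite ltnNge => /negbTE->.
    by rewrite addn0 ltn0.
- by [].
- subst y; apply: (IH _ j) => //.
  + exact: path_sorted su.
  + exact: path_sorted sw.
  + by move: hc; rewrite ltn_add2l.
  + by move=> i hi; have := heq i hi => /eqP; rewrite eqn_add2l => /eqP.
Qed.

Lemma lex_inc (u w : seq nat) j : sorted leq u -> sorted leq w -> size u = size w ->
  count (fun z => z <= j) u < count (fun z => z <= j) w ->
  (forall i, i < j -> count (fun z => z <= i) u = count (fun z => z <= i) w) ->
  ~~ lex_le u w.
Proof.
elim: u w j => [|x u IH] [|y w] j //= su sw [sz] hc heq.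
have au := order_path_min leq_trans su; have aw := order_path_min leq_trans sw.
case: (ltngtP x y) => hxy /=.
- exfalso.
  have c0 : forall k, k < y -> count (fun z => z <= k) w = 0.
    by move=> k hk; apply: (count_all0' _ hk).
  case: (ltnP x j) => hj.
  + by have := heq x hj; rewrite leqnn c0 // ; have := hxy; rewrite ltnNge => /negbTE->.
  + have hjy : j < y := leq_ltn_trans hj hxy.
    move: hc; rewrite c0 //; move: hjy; rewrite ltnNge => /negbTE->.
    by rewrite add0n ltn0.
- by [].
- subst y; apply: (IH _ j) => //.
  + exact: path_sorted su.
  + exact: path_sorted sw.
  + by move: hc; rewrite ltn_add2l.
  + by move=> i hi; have := heq i hi => /eqP; rewrite eqn_add2l => /eqP.
Qed.

Definition tail_of (V E : finType) (ends : E -> V * V) (D : orientation E)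
  (e : E) : V := if D e then (ends e).1 else (ends e).2.

Definition arcF (V E : finType) (ends : E -> V * V) (D : orientation E)
  (F : {set E}) : rel V :=
  fun u v => [exists e, [&& e \in F, tail_of ends D e == u & head_of ends D e == v]].

Lemma card_sum (T : finType) (P : pred T) : #|[set x | P x]| = \sum_x (P x : nat).
Proof.
rewrite -sum1_card big_mkcond /=; apply: eq_bigr => x _; rewrite inE; by case: (P x).
Qed.

Lemma indegE (V E : finType) (ends : E -> V * V) D v :
  indeg ends D v = \sum_e (head_of ends D e == v : nat).
Proof. by rewrite /indeg card_sum. Qed.

Lemma rev_path (V E : finType) (ends : E -> V * V) (D : orientation E) F p s :
  uniq (s :: p) -> path (arcF ends D F) s p ->
  exists D' : orientation E,
    (forall e, D' e != D e ->
       [&& e \in F, (ends e).1 \in s :: p & (ends e).2 \in s :: p]) /\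
    (forall v, indeg ends D' v + (v == last s p) = indeg ends D v + (v == s)).
Proof.
elim: p s => [|x p IH] s.
  by move=> _ _; exists D; split=> [e|v]; rewrite ?eqxx.
rewrite [uniq _]/= => /andP[snin ux] /= /andP[/existsP[e /and3P[eF /eqP te /eqP he]] hp].
have [D'' [h1 h2]] := IH x ux hp.
have D''e : D'' e = D e.
  apply/eqP; apply/negP => /negP hne; have := h1 e hne => /and3P[_ i1 i2].
  move: snin; rewrite -te /tail_of; by case: (D e); rewrite ?i1 ?i2.
exists [ffun e' => if e' == e then ~~ D e else D'' e']; split.
  move=> e'; rewrite ffunE; case: (eqVneq e' e) => [->|_] hne.
    rewrite eF /=; move: te he; rewrite /tail_of /head_of.
    by case: (D e) => <- <-; rewrite !inE !eqxx ?orbT.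
  have := h1 e' hne => /and3P[-> i1 i2].
  by rewrite !(in_cons s) i1 i2 !orbT.
set D' := [ffun e' => if e' == e then ~~ D e else D'' e'].
move=> v; have := h2 v; rewrite !indegE.
rewrite [\sum_i (head_of ends D' i == v : nat)](bigD1 e) //=.
rewrite [\sum_i (head_of ends D'' i == v : nat)](bigD1 e) //=.
rewrite [\sum_i (head_of ends D i == v : nat)](bigD1 e) //=.
have -> : \sum_(i | i != e) (head_of ends D' i == v : nat)
        = \sum_(i | i != e) (head_of ends D'' i == v : nat).
  by apply: eq_bigr => i /negbTE hi; rewrite /head_of ffunE hi.
have -> : head_of ends D' e = s.
  by rewrite -te /head_of /tail_of ffunE eqxx; case: (D e).
have -> : head_of ends D'' e = x by rewrite -he /head_of D''e.
rewrite he.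
rewrite (eq_sym s v) (eq_sym x v).
move: (v == s) (v == x) (v == last x p) => a b c; lia.
Qed.

Lemma rev_connect (V E : finType) (ends : E -> V * V) (D : orientation E) F s t :
  connect (arcF ends D F) s t ->
  exists D' : orientation E,
    (forall e, D' e != D e -> e \in F) /\
    (forall v, indeg ends D' v + (v == t) = indeg ends D v + (v == s)).
Proof.
move=> /connectP[p hp ->]; case/shortenP: hp => p' hp' hu _.
have [D' [h1 h2]] := rev_path hu hp'.
by exists D'; split => // e /h1 /and3P[].
Qed.

Lemma connect_flip (T : finType) (e1 e2 : rel T) x y :
  (forall u v, e1 u v -> e2 v u) -> connect e1 x y -> connect e2 y x.
Proof.
move=> h /connectP[p hp ->]; elim: p x hp => [|z p IH] x /=.
  by rewrite connect0.
case/andP => hxz hp; apply: connect_trans (IH z hp) _.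
exact/connect1/h.
Qed.

Definition noimp (V E : finType) (ends : E -> V * V) (D : orientation E) :=
  forall s t, connect (arcF ends D setT) s t ->
    indeg ends D t <= (indeg ends D s).+1.

Lemma count_sortE (V : finType) (r : rel nat) (f : V -> nat) (a : pred nat) :
  count a (sort r [seq f v | v <- enum V]) = count (fun v => a (f v)) (enum V).
Proof.
have hp : perm_eq (sort r [seq f v | v <- enum V]) [seq f v | v <- enum V].
  by rewrite perm_sort perm_refl.
by rewrite (permP hp) count_map. Qed.

Lemma count_diff1 (V : finType) (s : seq V) (P Q : pred V) t :
  uniq s -> t \in s -> (forall v, v != t -> P v = Q v) -> ~~ Q t -> P t ->
  count P s = (count Q s).+1.
Proof.
elim: s => [|x s IH] //= /andP[xn us]; rewrite inE => ht hPQ hQ hP.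
case: (eqVneq x t) => [ext|nxt].
  subst x; rewrite hP (negbTE hQ) /= add1n add0n; congr _.+1.
  apply: eq_in_count => v vs; apply: hPQ; apply/eqP => evt; subst v.
  by rewrite vs in xn.
rewrite (hPQ x nxt) IH //; last by move: ht; rewrite eq_sym (negbTE nxt).
by rewrite addnS.
Qed.

Lemma improve (V E : finType) (ends : E -> V * V) (D : orientation E) s t :
  connect (arcF ends D setT) s t -> (indeg ends D s).+2 <= indeg ends D t ->
  exists D' : orientation E,
    ~~ lex_le (dec_vec ends D) (dec_vec ends D') /\
    ~~ lex_le (inc_vec ends D') (inc_vec ends D).
Proof.
move=> hc hlt.
have nst : s != t by apply/eqP => est; subst t; move: hlt; rewrite ltnNge leqnSn.
have [D' [_ h]] := rev_connect hc.
set m := indeg ends D in hlt h *; set m' := indeg ends D' in h *.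
have hs : m' s = (m s).+1 by have := h s; rewrite eqxx (negbTE nst); lia.
have ht : m' t = (m t).-1 by have := h t; rewrite eqxx eq_sym (negbTE nst); lia.
have ho : forall v, v != s -> v != t -> m' v = m v.
  by move=> v /negbTE hvs /negbTE hvt; have := h v; rewrite hvs hvt !addn0.
exists D'; split.
- apply: (lex_dec (j := m t)).
  + exact: sort_sorted (fun a b => leq_total b a) _.
  + exact: sort_sorted (fun a b => leq_total b a) _.
  + rewrite !count_sortE (count_diff1 (t := t) (P := fun v => m t <= m v) (Q := fun v => m t <= m' v)) ?enum_uniq ?mem_enum //.
    * move=> v hvt; case: (eqVneq v s) => [->|hvs]; last by rewrite ho.
      by rewrite /= hs; apply/idP/idP; lia.
    * by rewrite /= ht; lia.
  + move=> i hi; rewrite !count_sortE; apply: eq_count => v /=; rewrite -/m -/m'.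
    case: (eqVneq v s) => [->|hvs]; first by rewrite hs; apply/idP/idP; lia.
    case: (eqVneq v t) => [->|hvt]; first by rewrite ht; apply/idP/idP; lia.
    by rewrite ho.
- apply: (lex_inc (j := m s)).
  + exact: sort_sorted leq_total _.
  + exact: sort_sorted leq_total _.
  + by rewrite !size_sort !size_map.
  + rewrite !count_sortE (count_diff1 (t := s) (P := fun v => m v <= m s) (Q := fun v => m' v <= m s)) ?enum_uniq ?mem_enum //.
    * move=> v hvs; case: (eqVneq v t) => [->|hvt]; last by rewrite ho.
      by rewrite /= ht; apply/idP/idP; lia.
    * by rewrite /= hs; lia.
  + move=> i hi; rewrite !count_sortE; apply: eq_count => v /=; rewrite -/m -/m'.
    case: (eqVneq v s) => [->|hvs]; first by rewrite hs; apply/idP/idP; lia.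
    case: (eqVneq v t) => [->|hvt]; first by rewrite ht; apply/idP/idP; lia.
    by rewrite ho.
Qed.

Lemma dec_noimp (V E : finType) (ends : E -> V * V) (D : orientation E) :
  dec_min ends D -> noimp ends D.
Proof.
move=> hD s t hc; rewrite leqNgt; apply/negP => hlt.
have [D' [h _]] := improve hc hlt.
by move: h; rewrite hD.
Qed.

Lemma inc_noimp (V E : finType) (ends : E -> V * V) (D : orientation E) :
  inc_max ends D -> noimp ends D.
Proof.
move=> hD s t hc; rewrite leqNgt; apply/negP => hlt.
have [D' [_ h]] := improve hc hlt.
by move: h; rewrite hD.
Qed.

Lemma sumR_indeg (V E : finType) (ends : E -> V * V) (D : orientation E) (R : {set V}) :
  \sum_(u in R) indeg ends D u = #|[set e | head_of ends D e \in R]|.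
Proof.
rewrite card_sum.
under eq_bigr => u _ do rewrite indegE.
rewrite exchange_big /=; apply: eq_bigr => e _.
case: (boolP (head_of ends D e \in R)) => hR.
  rewrite (bigD1 (head_of ends D e)) //= eqxx big1 // => u /andP[_ hu].
  by rewrite eq_sym (negbTE hu).
rewrite big1 // => u uR; case: eqP => // he; by rewrite he uR in hR.
Qed.

Lemma sum_lt (V : finType) (R : {set V}) (f g : V -> nat) x :
  (forall u, u \in R -> f u <= g u) -> x \in R -> f x < g x ->
  \sum_(u in R) f u < \sum_(u in R) g u.
Proof.
move=> h xR hx; rewrite (bigD1 x) //= [X in _ < X](bigD1 x) //= -addSn.
by apply: leq_add => //; apply: leq_sum => u /andP[uR _]; apply: h.
Qed.

Definition sw (V : finType) (s t v : V) := if v == s then t else if v == t then s else v.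

Lemma swK (V : finType) (s t : V) : involutive (sw s t).
Proof.
move=> v; rewrite /sw; case: (eqVneq v s) => [->|hs].
  by rewrite eqxx; case: (eqVneq t s) => [->|]; rewrite ?eqxx.
case: (eqVneq v t) => [->|ht]; first by rewrite eqxx.
by rewrite (negbTE hs) (negbTE ht).
Qed.

Lemma perm_sw (V : finType) (f g : V -> nat) s t :
  (forall v, g v = f (sw s t v)) ->
  perm_eq [seq f v | v <- enum V] [seq g v | v <- enum V].
Proof.
move=> h; rewrite (eq_map h) (map_comp f (sw s t)); apply: perm_map.
apply: uniq_perm; rewrite ?enum_uniq ?(map_inj_uniq (can_inj (swK s t))) ?enum_uniq //.
move=> v; rewrite mem_enum; apply/esym; rewrite -{1}(swK s t v).
by rewrite map_f // mem_enum.
Qed.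

Lemma main_good (V E : finType) (ends : E -> V * V) (good : orientation E -> Prop) :
  (exists D0, good D0) -> (forall D, good D -> noimp ends D) ->
  (forall D D', good D -> perm_eq [seq indeg ends D v | v <- enum V]
                                  [seq indeg ends D' v | v <- enum V] -> good D') ->
  forall D1, noimp ends D1 -> good D1.
Proof.
move=> [D0 g0] g2 g3 D1 n1.
suff: forall n D2, good D2 -> #|[set e | D2 e != D1 e]| < n -> good D1.
  by move=> /(_ _ D0 g0 (ltnSn _)).
elim=> [//|n IH] D2 gD2 hn.
case: (boolP [forall v, indeg ends D1 v == indeg ends D2 v]) => [/forallP h|].
  apply: (g3 _ _ gD2); rewrite (@eq_map _ _ (indeg ends D2) (indeg ends D1)) ?perm_refl //.
  by move=> v; apply/esym/eqP/h.
move=> /forallPn[v0 hv0].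
have [t ht] : exists t, indeg ends D2 t < indeg ends D1 t.
  case: (boolP [exists t, indeg ends D2 t < indeg ends D1 t]) => [/existsP//|/existsPn hn'].
  exfalso.
  have hle : forall u, u \in [set: V] -> indeg ends D1 u <= indeg ends D2 u.
    by move=> u _; move: (hn' u); rewrite -leqNgt.
  have := sum_lt hle (in_setT v0).
  have -> : indeg ends D1 v0 < indeg ends D2 v0.
    by rewrite ltn_neqAle hv0 hle ?in_setT.
  rewrite !sumR_indeg.
  have hT : forall D : orientation E, [set e | head_of ends D e \in [set: V]] = setT.
    by move=> D; apply/setP => e; rewrite !inE.
  by rewrite !hT ltnn => /(_ isT).
set H := [set e | D2 e != D1 e].
set R := [set u | connect (arcF ends D2 H) t u].
have tR : t \in R by rewrite inE connect0.
have [s sR hs] : exists2 s, s \in R & indeg ends D1 s < indeg ends D2 s.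
  case: (boolP [exists s, (s \in R) && (indeg ends D1 s < indeg ends D2 s)]).
    by move=> /existsP[s /andP[]]; exists s.
  move=> /existsPn hn'; exfalso.
  have hle : forall u, u \in R -> indeg ends D2 u <= indeg ends D1 u.
    by move=> u uR; move: (hn' u); rewrite uR /= -leqNgt.
  have := sum_lt hle tR ht; rewrite !sumR_indeg ltnNge => /negP; apply.
  apply: subset_leq_card; apply/subsetP => e; rewrite !inE.
  case: (eqVneq (D2 e) (D1 e)) => [he|hne]; first by rewrite /head_of he.
  move=> h1; apply: connect_trans h1 _; apply: connect1.
  apply/existsP; exists e; rewrite !inE hne /= eqxx andbT.
  by rewrite /tail_of /head_of; move: hne; case: (D2 e); case: (D1 e).
have nst : s != t by apply/eqP => est; subst s; move: ht; rewrite ltnNge ltnW.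
have cts : connect (arcF ends D2 H) t s by rewrite inE in sR.
have c1 : connect (arcF ends D1 setT) s t.
  apply: connect_flip cts => u v /existsP[e /and3P[eH tu hv]].
  apply/existsP; exists e; rewrite in_setT /=.
  rewrite inE in eH; move: tu hv; rewrite /tail_of /head_of.
  by move: eH; case: (D2 e); case: (D1 e) => //= _ /eqP-> /eqP->; rewrite !eqxx.
have c2 : connect (arcF ends D2 setT) t s.
  apply: connect_sub cts => u v /existsP[e /and3P[eH tu hv]].
  by apply/connect1/existsP; exists e; rewrite in_setT tu hv.
have i1 := n1 _ _ c1; have i2 := g2 _ gD2 _ _ c2.
have [D2' [h1 h2]] := rev_connect cts.
have e2s : indeg ends D2' s = indeg ends D2 t.
  by have := h2 s; rewrite eqxx (negbTE nst); lia.
have e2t : indeg ends D2' t = indeg ends D2 s.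
  by have := h2 t; rewrite eqxx eq_sym (negbTE nst); lia.
have gD2' : good D2'.
  apply: (g3 _ _ gD2); apply: (perm_sw (s := s) (t := t)) => v.
  rewrite /sw; case: (eqVneq v s) => [->//|hvs].
  case: (eqVneq v t) => [->//|hvt].
  by have := h2 v; rewrite (negbTE hvs) (negbTE hvt) !addn0.
apply: (IH D2' gD2'); rewrite -ltnS; apply: leq_trans hn; rewrite ltnS.
apply: proper_card; apply/properP; split.
  apply/subsetP => e; rewrite !inE; case: (eqVneq (D2' e) (D2 e)) => [->//|hne].
  have := h1 e hne; rewrite inE => hH _; exact: hH.
have [e he] : exists e, D2' e != D2 e.
  case: (boolP [exists e, D2' e != D2 e]) => [/existsP//|/existsPn hn'].
  exfalso; have eqD : D2' = D2 by apply/ffunP => e; move: (hn' e); rewrite negbK => /eqP.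
  by move: e2t; rewrite eqD; lia.
exists e; first by have := h1 e he.
have := h1 e he; rewrite !inE negbK => hH.
by move: he hH; case: (D2' e); case: (D2 e); case: (D1 e).
Qed.

Lemma good_perm_dec (V E : finType) (ends : E -> V * V) (D D' : orientation E) :
  dec_min ends D -> perm_eq [seq indeg ends D v | v <- enum V]
                            [seq indeg ends D' v | v <- enum V] -> dec_min ends D'.
Proof.
move=> hD hp D''; have -> : dec_vec ends D' = dec_vec ends D; last exact: hD.
apply/esym/perm_sortP => //.
- by move=> a b; exact: leq_total.
- by move=> a b c h1 h2; exact: leq_trans h2 h1.
- by move=> a b h; apply: anti_leq; rewrite andbC.
Qed.

Lemma good_perm_inc (V E : finType) (ends : E -> V * V) (D D' : orientation E) :
  inc_max ends D -> perm_eq [seq indeg ends D v | v <- enum V]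
                            [seq indeg ends D' v | v <- enum V] -> inc_max ends D'.
Proof.
move=> hD hp D''; have -> : inc_vec ends D' = inc_vec ends D; last exact: hD.
apply/esym/perm_sortP => //.
- exact: leq_total.
- exact: leq_trans.
- exact: anti_leq.
Qed.

Lemma ex_dec (V E : finType) (ends : E -> V * V) : exists D, dec_min ends D.
Proof.
have [m hm] := @exists_min _ (fun D1 D2 : orientation E => lex_le (dec_vec ends D1) (dec_vec ends D2))
  [ffun=> true] (fun a b => lex_total _ _) (fun a b c => @lex_trans _ _ _) (fun a => lex_refl _).
by exists m.
Qed.

Lemma ex_inc (V E : finType) (ends : E -> V * V) : exists D, inc_max ends D.
Proof.
have [m hm] := @exists_min _ (fun D1 D2 : orientation E => lex_le (inc_vec ends D2) (inc_vec ends D1))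
  [ffun=> true] (fun a b => lex_total _ _) (fun a b c h1 h2 => lex_trans h2 h1) (fun a => lex_refl _).
by exists m.
Qed.

Unset Implicit Arguments.
Set Strict Implicit.

Theorem corollary4p3 (V E : finType) (ends : E -> V * V)
  (no_loops : forall e : E, (ends e).1 != (ends e).2)
  (D : orientation E) :
  dec_min ends D <-> inc_max ends D.
Proof.
split=> h.
- apply: (main_good (ex_inc ends)) => //.
  + exact: inc_noimp.
  + exact: good_perm_inc.
  + exact: dec_noimp.
- apply: (main_good (ex_dec ends)) => //.
  + exact: dec_noimp.
  + exact: good_perm_dec.
  + exact: inc_noimp.
Qed.
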